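(* Let $n\ge 2$, let $A\in\mathbb{R}^{n\times n}$ be symmetric, let $B^a\in\mathbb{R}^{n\times n}$ be skew-symmetric and $B^s\in\mathbb{R}^{n\times n}$ symmetric, and let $K\ge 1$ be an integer such that $(B^s,A,B^a)$ satisfies the inhomogeneous Kalman rank condition of order $K$. Then there exist nonnegative integers $\alpha,\beta$ and a constant $c>0$ such that for every $\widehat U\in\mathbb{C}^n$: (i) for every real $\xi$ with $|\xi|\ge 1$, $$\sum_{k=0}^{K}|\xi|^{-2k}\,\big|B^s(i\xi A+B^a)^k\widehat U\big|^2\;\ge\; c\,|\xi|^{-2\alpha}|\widehat U|^2;$$ (ii) for every real $\xi$ with $0<|\xi|\le 1$, $$\sum_{k=0}^{K}\big|B^s(i\xi A+B^a)^k\widehat U\big|^2\;\ge\; c\,|\xi|^{2\beta}|\widehat U|^2.$$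
   Context: $|\cdot|$ denotes the Hermitian norm on $\mathbb{C}^n$. Inhomogeneous Kalman rank condition of order $K$: for every real $\xi\neq 0$, the $(K+1)n\times n$ complex matrix obtained by stacking the blocks $B^s,\;B^s(i\xi A+B^a),\;B^s(i\xi A+B^a)^2,\;\dots,\;B^s(i\xi A+B^a)^K$ on top of each other has rank $n$. *)

(* Defs.v *)
From HB Require Import structures.
From mathcomp Require Import all_boot all_order all_algebra.
From mathcomp Require Import complex.
From mathcomp Require Import reals.
Set Implicit Arguments. Unset Strict Implicit. Unset Printing Implicit Defensive.
Import Order.TTheory GRing.Theory Num.Theory.
Local Open Scope ring_scope.
Local Open Scope complex_scope.

Definition cplx_mx (R : rcfType) (m p : nat) (M : 'M[R]_(m, p)) : 'M[R[i]]_(m, p) :=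
  map_mx (fun x => x%:C) M.

Definition symb_mx (R : rcfType) (n : nat) (A Ba : 'M[R]_n) (xi : R) : 'M[R[i]]_n :=
  ('i * xi%:C) *: cplx_mx A + cplx_mx Ba.

Definition kalman_mx (R : rcfType) (n : nat) (Bs A Ba : 'M[R]_n) (K : nat) (xi : R)
  : 'M[R[i]]_(\sum_(k < K.+1) n, n) :=
  \mxcol_(k < K.+1) (cplx_mx Bs *m symb_mx A Ba xi ^+ k).

Definition kalman_rank_cond (R : rcfType) (n : nat) (Bs A Ba : 'M[R]_n) (K : nat) : Prop :=
  forall xi : R, xi != 0 -> \rank (kalman_mx Bs A Ba K xi) = n.

Definition hnorm2 (R : rcfType) (n : nat) (v : 'cV[R[i]]_n) : R :=
  \sum_(j < n) ((@complex.Re R (v j 0)) ^+ 2 + (@complex.Im R (v j 0)) ^+ 2).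

(* Main.v *)
Require Import Defs.
From HB Require Import structures.
From mathcomp Require Import all_boot all_order all_algebra.
From mathcomp Require Import complex.
From mathcomp Require Import reals.
From mathcomp Require Import ring lra.
From mathcomp Require Import classical_sets topology normedtype derive realfun.
Import Order.TTheory GRing.Theory Num.Theory.
Import ComplexField.Normc.
Import numFieldNormedType.Exports.
Local Open Scope ring_scope.
Local Open Scope complex_scope.
Lemma normc2 (R : rcfType) (z : R[i]) : normc z ^+ 2 = (complex.Re z)^+2 + (complex.Im z)^+2.
Proof. by case: z => a b /=; rewrite sqr_sqrtr // addr_ge0 // sqr_ge0. Qed.

Lemma normc_ge0 (R : rcfType) (z : R[i]) : 0 <= normc z.
Proof. by case: z => a b /=; rewrite sqrtr_ge0. Qed.

Lemma normc_real (R : rcfType) (t : R) : normc (t%:C)%C = `|t|.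
Proof. by rewrite /= expr0n /= addr0 sqrtr_sqr. Qed.

Lemma normcX (R : rcfType) (z : R[i]) k : normc (z ^+ k) = normc z ^+ k.
Proof. elim: k => [|k IH]; first by rewrite !expr0 normc1. by rewrite !exprS normcM IH. Qed.

Lemma normc_sum (R : rcfType) (I : finType) (P : pred I) (F : I -> R[i]) :
  normc (\sum_(i | P i) F i) <= \sum_(i | P i) normc (F i).
Proof.
elim/big_rec2: _ => [|i y z _ Hy]; first by rewrite normc0.
exact: le_trans (le_normcD _ _) (lerD (lexx _) Hy).
Qed.

Lemma hnorm2E (R : rcfType) m (v : 'cV[R[i]]_m) : hnorm2 v = \sum_j normc (v j 0) ^+ 2.
Proof. by rewrite /hnorm2; apply: eq_bigr => j _; rewrite normc2. Qed.

Lemma hnorm2_ge0 (R : rcfType) m (v : 'cV[R[i]]_m) : 0 <= hnorm2 v.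
Proof. by rewrite hnorm2E sumr_ge0 // => j _; rewrite sqr_ge0. Qed.

Lemma sum_sq_le (R : rcfType) (I : finType) (x : I -> R) :
  (\sum_i x i) ^+ 2 <= #|I|%:R * \sum_i x i ^+ 2.
Proof.
have H : (\sum_i x i) ^+ 2 *+ 2 <= \sum_i \sum_j (x i ^+ 2 + x j ^+ 2).
  rewrite expr2 mulr_suml -sumrMnl; apply: ler_sum => i _.
  rewrite mulr_sumr -sumrMnl; apply: ler_sum => j _.
  have := sqr_ge0 (x i - x j); rewrite sqrrB; lra.
have E : \sum_i \sum_j (x i ^+ 2 + x j ^+ 2) = (#|I|%:R * \sum_i x i ^+ 2) *+ 2.
  under eq_bigr => i _ do rewrite big_split /= sumr_const.
  rewrite big_split /= sumr_const.
  under eq_bigr => i _ do rewrite -mulr_natl.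
  rewrite -mulr_sumr mulr2n; congr (_ + _).
  rewrite -[LHS]mulr_natl; congr (_ * _); congr (_ %:R); exact: eq_card.
by move: H; rewrite E lerMn2r.
Qed.

Arguments normc_ge0 {R}.

Arguments normc_sum {R I P F}.
Arguments sum_sq_le {R I x}.

Lemma sqr_le (R : rcfType) (a b : R) : 0 <= a -> a <= b -> a ^+ 2 <= b ^+ 2.
Proof. by move=> a0 ab; rewrite !expr2 ler_pM. Qed.

Arguments sqr_le {R a b}.
Lemma hnorm2_sum (R : rcfType) m N (y : 'I_N -> 'cV[R[i]]_m) :
  hnorm2 (\sum_(k < N) y k) <= N%:R * \sum_(k < N) hnorm2 (y k).
Proof.
rewrite hnorm2E.
under [X in _ <= _ * X]eq_bigr => k _ do rewrite hnorm2E.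
rewrite exchange_big mulr_sumr /=; apply: ler_sum => j _.
rewrite summxE; apply: le_trans (sqr_le (normc_ge0 _) normc_sum) _.
by apply: le_trans sum_sq_le _; rewrite card_ord.
Qed.

Lemma hnorm2_mul (R : rcfType) m p (W : 'M[R[i]]_(m, p)) (x : 'cV[R[i]]_p) (Cb : R) :
  0 <= Cb -> (forall i j, normc (W i j) <= Cb) ->
  hnorm2 (W *m x) <= (m * p)%:R * Cb ^+ 2 * hnorm2 x.
Proof.
move=> C0 HW; rewrite !hnorm2E natrM.
have -> : (m%:R * p%:R * Cb ^+ 2) * \sum_j normc (x j 0) ^+ 2 =
          \sum_(i < m) (p%:R * Cb ^+ 2 * \sum_j normc (x j 0) ^+ 2).
  by rewrite sumr_const card_ord -[X in _ = X]mulr_natl !mulrA.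
apply: ler_sum => i _; rewrite mxE.
have H1 : normc (\sum_j W i j * x j 0) <= Cb * \sum_j normc (x j 0).
  apply: le_trans normc_sum _; rewrite mulr_sumr; apply: ler_sum => j _.
  by rewrite normcM ler_wpM2r ?normc_ge0.
apply: le_trans (sqr_le (normc_ge0 _) H1) _.
rewrite [p%:R * _]mulrC -mulrA exprMn; apply: ler_wpM2l; first exact: sqr_ge0.
by apply: le_trans sum_sq_le _; rewrite card_ord.
Qed.

Lemma hnorm2_scale (R : rcfType) m (a : R[i]) (x : 'cV[R[i]]_m) :
  hnorm2 (a *: x) = normc a ^+ 2 * hnorm2 x.
Proof.
rewrite !hnorm2E mulr_sumr; apply: eq_bigr => j _.
by rewrite mxE normcM exprMn.
Qed.

Lemma hnorm2_eq0 (R : rcfType) m (x : 'cV[R[i]]_m) : hnorm2 x = 0 -> x = 0.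
Proof.
rewrite hnorm2E => /eqP; rewrite psumr_eq0 => [/allP H|j _]; last by rewrite sqr_ge0.
apply/matrixP => j k; rewrite ord1 mxE.
have /H : j \in index_enum 'I_m by rewrite mem_index_enum.
by rewrite /= sqrf_eq0 => /eqP/eq0_normc.
Qed.

Lemma size_map_le (aR rR : nzRingType) (f : aR -> rR) (p : {poly aR}) :
  f 0 = 0 -> (size (map_poly f p) <= size p)%N.
Proof.
by move=> f0; apply/leq_sizeP => j Hj; rewrite coef_map_id0 // nth_default.
Qed.

Lemma ReD (R : rcfType) (x y : R[i]) : complex.Re (x + y) = complex.Re x + complex.Re y.
Proof. by case: x; case: y. Qed.
Lemma ImD (R : rcfType) (x y : R[i]) : complex.Im (x + y) = complex.Im x + complex.Im y.
Proof. by case: x; case: y. Qed.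
Lemma ReMr (R : rcfType) (x : R[i]) (r : R) : complex.Re (x * r%:C) = complex.Re x * r.
Proof. by case: x => a b /=; rewrite mulr0 subr0. Qed.
Lemma ImMr (R : rcfType) (x : R[i]) (r : R) : complex.Im (x * r%:C) = complex.Im x * r.
Proof. by case: x => a b /=; rewrite mulr0 add0r. Qed.

Lemma Re_horner (R : rcfType) (p : {poly R[i]}) (t : R) :
  complex.Re p.[t%:C] = (map_poly (@complex.Re R) p).[t].
Proof.
rewrite (horner_coef_wide _ (leqnn (size p))).
rewrite (horner_coef_wide _ (@size_map_le _ _ (@complex.Re R) p (erefl _))) //.
rewrite (big_morph (@complex.Re R) (@ReD R) (erefl : complex.Re (0 : R[i]) = 0)).
apply: eq_bigr => i _; rewrite -rmorphXn ReMr coef_map_id0 //.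
Qed.

Lemma Im_horner (R : rcfType) (p : {poly R[i]}) (t : R) :
  complex.Im p.[t%:C] = (map_poly (@complex.Im R) p).[t].
Proof.
rewrite (horner_coef_wide _ (leqnn (size p))).
rewrite (horner_coef_wide _ (@size_map_le _ _ (@complex.Im R) p (erefl _))) //.
rewrite (big_morph (@complex.Im R) (@ImD R) (erefl : complex.Im (0 : R[i]) = 0)).
apply: eq_bigr => i _; rewrite -rmorphXn ImMr coef_map_id0 //.
Qed.

Lemma normc_horner_le (R : rcfType) (p : {poly R[i]}) (t : R) :
  `|t| <= 1 -> normc p.[t%:C] <= \sum_(i < size p) normc p`_i.
Proof.
move=> t1; rewrite horner_coef; apply: le_trans normc_sum _.
apply: ler_sum => i _; rewrite normcM normcX normc_real.
rewrite -[X in _ <= X]mulr1 ler_wpM2l ?normc_ge0 // exprn_ile1 //.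
Qed.

Lemma poly_factorX (R : idomainType) (p : {poly R}) :
  p != 0 -> exists m (s : {poly R}), p = 'X^m * s /\ s.[0] != 0.
Proof.
move: {2}(size p) (leqnn (size p)) => N; elim: N p => [|N IH] p Hs pn0.
  by move: Hs; rewrite leqn0 size_poly_eq0 (negPf pn0).
have [r0|r0] := eqVneq p.[0] 0; last by exists 0%N, p; rewrite expr0 mul1r.
have /factor_theorem [q Hq] : root p 0 by apply/eqP.
rewrite subr0 in Hq.
have qn0 : q != 0 by apply: contraNneq pn0 => q0; rewrite Hq q0 mul0r.
have sq : (size q <= N)%N.
  move: Hs; rewrite Hq size_mulX // ltnS //.
have [m [s [Hqs Hs0]]] := IH q sq qn0.
by exists m.+1, s; rewrite Hq Hqs exprSr mulrAC.
Qed.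

Lemma poly_lower (R : realType) (r : {poly R}) :
  r != 0 -> (forall t : R, `|t| <= 1 -> t != 0 -> r.[t] != 0) ->
  exists (m : nat) (c : R), 0 < c /\ forall t : R, `|t| <= 1 -> c * `|t| ^+ m <= `|r.[t]|.
Proof.
move=> rn0 Hr.
have [m [s [Hrs Hs0]]] := @poly_factorX _ _ rn0.
have Hs : forall t : R, `|t| <= 1 -> s.[t] != 0.
  move=> t t1; have [->|tn0] := eqVneq t 0; first by [].
  by apply: contraNneq (Hr t t1 tn0) => st0; rewrite Hrs hornerM st0 mulr0.
have cf : continuous (fun t : R => `|s.[t]|).
  move=> t; apply: continuous_comp; first exact: continuous_horner.
  exact: norm_continuous.
have H11 : (-1 : R) <= 1 by lra.
have [t0 t0in Hmin] := @EVT_min R (fun t => `|s.[t]|) (-1) 1 H11 (continuous_subspaceT cf).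
have inI : forall t : R, (t \in `[-1, 1]) = (`|t| <= 1).
  by move=> t; rewrite in_itv /= ler_norml.
exists m, `|s.[t0]|; split.
  by rewrite normr_gt0; apply: Hs; rewrite -inI.
move=> t t1; rewrite Hrs hornerM hornerXn normrM normrX mulrC.
by rewrite ler_wpM2l ?exprn_ge0 ?normr_ge0 // Hmin // inI.
Qed.

Lemma map_mxXn (aR rR : pzRingType) (f : {rmorphism aR -> rR}) n (A : 'M[aR]_n) k :
  map_mx f (A ^+ k) = (map_mx f A) ^+ k.
Proof.
elim: k => [|k IH]; first by rewrite !expr0; apply: map_mx1.
by rewrite !exprS -!mulmxE map_mxM IH.
Qed.

Definition cj (R : rcfType) m p (M : 'M[R[i]]_(m, p)) := map_mx (@conjc R) M.

Arguments cj {R m p}.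

Definition Mk (R : rcfType) n (B X0 X1 : 'M[R[i]]_n) (t : R) (k : nat) :=
  B *m (X0 + t%:C *: X1) ^+ k.

Arguments Mk {R n}.

Lemma conjc_mul_self (R : rcfType) (z : R[i]) : conjc z * z = (normc z ^+ 2)%:C.
Proof.
rewrite normc2; case: z => a b /=; rewrite /real_complex_def; congr (_ +i* _).
  by rewrite mulNr opprK !expr2.
by rewrite mulNr mulrC subrr.
Qed.

Lemma hnorm2_form (R : rcfType) m (x : 'cV[R[i]]_m) :
  (hnorm2 x)%:C = ((cj x)^T *m x) 0 0.
Proof.
rewrite hnorm2E rmorph_sum mxE; apply: eq_bigr => j _.
by rewrite !mxE conjc_mul_self.
Qed.

Lemma le_sum1 (R : rcfType) (I : finType) (F : I -> R) i :
  (forall j, 0 <= F j) -> F i <= \sum_j F j.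
Proof. by move=> H; rewrite (bigD1 i) //= lerDl sumr_ge0. Qed.

Definition Gt (R : rcfType) n K (B X0 X1 : 'M[R[i]]_n) (t : R) : 'M[R[i]]_n :=
  \sum_(k < K.+1) (cj (Mk B X0 X1 t k))^T *m Mk B X0 X1 t k.

Arguments Gt {R n}.

Lemma Gt_form (R : rcfType) n K (B X0 X1 : 'M[R[i]]_n) (t : R) (U : 'cV[R[i]]_n) :
  ((cj U)^T *m Gt K B X0 X1 t *m U) 0 0 =
  (\sum_(k < K.+1) hnorm2 (Mk B X0 X1 t k *m U))%:C.
Proof.
rewrite /Gt mulmx_sumr mulmx_suml summxE rmorph_sum; apply: eq_bigr => k _.
by rewrite /= hnorm2_form /cj /Mk !map_mxM !trmx_mul !mulmxA.
Qed.

Lemma Gt_det_neq0 (R : rcfType) n K (B X0 X1 : 'M[R[i]]_n) (t : R) :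
  (forall U : 'cV[R[i]]_n, (forall k : 'I_K.+1, Mk B X0 X1 t k *m U = 0) -> U = 0) ->
  \det (Gt K B X0 X1 t) != 0.
Proof.
move=> Hr; apply/negP; rewrite -det_tr => /det0P [v vn0 vG].
have GU : Gt K B X0 X1 t *m v^T = 0 by rewrite -[Gt _ _ _ _ _]trmxK -trmx_mul vG trmx0.
have H0 : (\sum_(k < K.+1) hnorm2 (Mk B X0 X1 t k *m v^T))%:C = 0.
  by rewrite -Gt_form -mulmxA GU mulmx0 mxE.
have H1 : \sum_(k < K.+1) hnorm2 (Mk B X0 X1 t k *m v^T) = 0.
  by apply: complexI; rewrite H0.
have H2 : v^T = 0.
  apply: Hr => k; apply: hnorm2_eq0.
  by apply: (psumr_eq0P _ H1) => // j _; apply: hnorm2_ge0.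
by move: vn0; rewrite -[v]trmxK H2 trmx0 eqxx.
Qed.

Definition PX (R : rcfType) n (X0 X1 : 'M[R[i]]_n) : 'M[{poly R[i]}]_n :=
  map_mx polyC X0 + 'X *: map_mx polyC X1.
Arguments PX {R n}.
Definition Pk (R : rcfType) n (B X0 X1 : 'M[R[i]]_n) (k : nat) : 'M[{poly R[i]}]_n :=
  map_mx polyC B *m PX X0 X1 ^+ k.
Arguments Pk {R n}.
Definition Pc (R : rcfType) m p (P : 'M[{poly R[i]}]_(m, p)) :=
  map_mx (map_poly (@conjc R)) P.
Arguments Pc {R m p}.
Definition Gp (R : rcfType) n K (B X0 X1 : 'M[R[i]]_n) : 'M[{poly R[i]}]_n :=
  \sum_(k < K.+1) (Pc (Pk B X0 X1 k))^T *m Pk B X0 X1 k.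
Arguments Gp {R n}.
Definition Wp (R : rcfType) n K (B X0 X1 : 'M[R[i]]_n) (k : nat) : 'M[{poly R[i]}]_n :=
  \adj (Gp K B X0 X1) *m (Pc (Pk B X0 X1 k))^T.
Arguments Wp {R n}.

Lemma map_tr (aT rT : Type) (f : aT -> rT) m p (A : 'M[aT]_(m, p)) :
  map_mx f (A^T) = (map_mx f A)^T.
Proof. by apply/matrixP => i j; rewrite !mxE. Qed.

Lemma ev_polyC (R : rcfType) m p (x : R[i]) (M : 'M[R[i]]_(m, p)) :
  map_mx (horner_eval x) (map_mx polyC M) = M.
Proof. by apply/matrixP => i j; rewrite !mxE /horner_eval hornerC. Qed.

Lemma ev_Pk (R : rcfType) n (B X0 X1 : 'M[R[i]]_n) (t : R) k :
  map_mx (horner_eval t%:C) (Pk B X0 X1 k) = Mk B X0 X1 t k.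
Proof.
rewrite /Pk /Mk map_mxM map_mxXn /PX map_mxD map_mxZ !ev_polyC.
by rewrite /= /horner_eval hornerX.
Qed.

Lemma ev_Pc (R : rcfType) m p (t : R) (P : 'M[{poly R[i]}]_(m, p)) :
  map_mx (horner_eval t%:C) (Pc P) = cj (map_mx (horner_eval t%:C) P).
Proof.
apply/matrixP => i j; rewrite !mxE /horner_eval.
by rewrite -[in LHS](conjc_real t) (horner_map (@conjc R)).
Qed.

Lemma ev_Gp (R : rcfType) n K (B X0 X1 : 'M[R[i]]_n) (t : R) :
  map_mx (horner_eval t%:C) (Gp K B X0 X1) = Gt K B X0 X1 t.
Proof.
rewrite /Gp /Gt map_mx_sum; apply: eq_bigr => k _.
by rewrite map_mxM map_tr ev_Pc ev_Pk.
Qed.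

Lemma ev_det (R : rcfType) n K (B X0 X1 : 'M[R[i]]_n) (t : R) :
  (\det (Gp K B X0 X1)).[t%:C] = \det (Gt K B X0 X1 t).
Proof. by rewrite -ev_Gp det_map_mx. Qed.

Lemma ev_Wp (R : rcfType) n K (B X0 X1 : 'M[R[i]]_n) (t : R) k :
  map_mx (horner_eval t%:C) (Wp K B X0 X1 k) =
  \adj (Gt K B X0 X1 t) *m (cj (Mk B X0 X1 t k))^T.
Proof. by rewrite /Wp map_mxM map_mx_adj ev_Gp map_tr ev_Pc ev_Pk. Qed.

Lemma key (R : realType) n K (B X0 X1 : 'M[R[i]]_n) :
  (forall t : R, `|t| <= 1 -> t != 0 -> forall U : 'cV[R[i]]_n,
      (forall k : 'I_K.+1, Mk B X0 X1 t k *m U = 0) -> U = 0) ->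
  exists (m : nat) (c : R), 0 < c /\ forall t : R, `|t| <= 1 -> forall U : 'cV[R[i]]_n,
     c * `|t| ^+ m * hnorm2 U <= \sum_(k < K.+1) hnorm2 (Mk B X0 X1 t k *m U).
Proof.
move=> Hr.
pose dp := \det (Gp K B X0 X1).
pose rp : {poly R} := (map_poly (@complex.Re R) dp) ^+ 2 + (map_poly (@complex.Im R) dp) ^+ 2.
have rpE : forall t, rp.[t] = normc (\det (Gt K B X0 X1 t)) ^+ 2.
  by move=> t; rewrite hornerD !horner_exp -Re_horner -Im_horner ev_det normc2.
have Hrp : forall t : R, `|t| <= 1 -> t != 0 -> rp.[t] != 0.
  move=> t t1 tn0; rewrite rpE sqrf_eq0; apply/negP => /eqP /eq0_normc /eqP.
  by apply/negP; apply: Gt_det_neq0; apply: Hr.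
have rpn0 : rp != 0.
  apply/negP => /eqP r0; have := Hrp 1 _ (oner_neq0 _).
  by rewrite r0 horner0 eqxx normr1 lexx => /(_ isT).
have [m [c1 [c1pos Hc1]]] := @poly_lower _ _ rpn0 Hrp.
pose S (k : 'I_K.+1) (i j : 'I_n) :=
  \sum_(l < size (Wp K B X0 X1 k i j)) normc (Wp K B X0 X1 k i j)`_l.
have S0 : forall k i j, 0 <= S k i j by move=> k i j; apply: sumr_ge0 => l _; apply: normc_ge0.
pose Cb := \sum_k \sum_i \sum_j S k i j.
have Cb0 : 0 <= Cb by do 3 (apply: sumr_ge0 => ? _).
have HW : forall t : R, `|t| <= 1 -> forall (k : 'I_K.+1) (i j : 'I_n),
    normc ((\adj (Gt K B X0 X1 t) *m (cj (Mk B X0 X1 t k))^T) i j) <= Cb.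
  move=> t t1 k i j; rewrite -ev_Wp mxE /horner_eval.
  apply: le_trans (@normc_horner_le _ _ _ t1) _.

  apply: le_trans (@le_sum1 _ _ (fun j => S k i j) j (S0 k i)) _.
  apply: le_trans (@le_sum1 _ _ (fun i => \sum_j S k i j) i _) _.
    by move=> i'; apply: sumr_ge0 => j' _.
  apply: (@le_sum1 _ _ (fun k => \sum_i \sum_j S k i j) k).
  by move=> k'; do 2 (apply: sumr_ge0 => ? _).
pose D := (K.+1)%:R * ((n * n)%:R * Cb ^+ 2) + 1.
have Dpos : 0 < D by rewrite ltr_pwDr // mulr_ge0 // mulr_ge0 // sqr_ge0.
exists m, (c1 / D); split; first by rewrite divr_gt0.
move=> t t1 U.
pose Sm := \sum_(k < K.+1) hnorm2 (Mk B X0 X1 t k *m U).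
have Sm0 : 0 <= Sm by apply: sumr_ge0 => k _; apply: hnorm2_ge0.
have Iden : \det (Gt K B X0 X1 t) *: U =
    \sum_(k < K.+1) (\adj (Gt K B X0 X1 t) *m (cj (Mk B X0 X1 t k))^T) *m (Mk B X0 X1 t k *m U).
  rewrite -mul_scalar_mx -mul_adj_mx {2}/Gt mulmx_sumr mulmx_suml.
  by apply: eq_bigr => k _; rewrite !mulmxA.
have main : c1 * `|t| ^+ m * hnorm2 U <= D * Sm.
  apply: le_trans (_ : rp.[t] * hnorm2 U <= _).
    rewrite ler_wpM2r ?hnorm2_ge0 //; apply: le_trans (Hc1 t t1) _.
    by rewrite ger0_norm // rpE sqr_ge0.
  rewrite rpE -hnorm2_scale Iden.
  apply: le_trans (@hnorm2_sum _ _ _ _) _.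
  apply: le_trans (_ : _ <= (K.+1)%:R * ((n * n)%:R * Cb ^+ 2) * Sm) _; last first.
    by rewrite ler_wpM2r // lerDl.
  rewrite -mulrA ler_wpM2l // /Sm mulr_sumr; apply: ler_sum => k _.
  by apply: hnorm2_mul => // i j; apply: HW.
rewrite -(ler_pM2l Dpos); apply: le_trans main.
rewrite le_eqVlt; apply/orP; left; apply/eqP; field.
by rewrite gt_eqF.
Qed.

Lemma rank_kill (R : realType) n (A Ba Bs : 'M[R]_n) K (xi : R) (U : 'cV[R[i]]_n) :
  kalman_rank_cond Bs A Ba K -> xi != 0 ->
  (forall k : 'I_K.+1, cplx_mx Bs *m symb_mx A Ba xi ^+ k *m U = 0) -> U = 0.
Proof.
move=> Hk xi0 H0.
have rf : row_full (kalman_mx Bs A Ba K xi) by rewrite /row_full Hk.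
have [X HX] := row_fullP rf.
have KU : kalman_mx Bs A Ba K xi *m U = 0.
  rewrite /kalman_mx mxcol_mul -(mxcol0 (p_ := fun k : 'I_K.+1 => n) 1).
  by apply: eq_mxcol => k; apply: H0.
by rewrite -(mul1mx U) -HX -mulmxA KU mulmx0.
Qed.

Lemma symb_scale (R : realType) n (A Ba : 'M[R]_n) (xi : R) : xi != 0 ->
  symb_mx A Ba xi = xi%:C *: (('i : R[i]) *: cplx_mx A + (xi^-1)%:C *: cplx_mx Ba).
Proof.
move=> xi0; rewrite /symb_mx scalerDr !scalerA -rmorphM mulfV // scale1r.
by rewrite mulrC.
Qed.

Lemma exprZmx (C : comNzRingType) n (a : C) (M : 'M[C]_n) k :
  (a *: M) ^+ k = a ^+ k *: M ^+ k.
Proof.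
elim: k => [|k IH]; first by rewrite !expr0 scale1r.
by rewrite !exprS -!mulmxE IH -scalemxAr -scalemxAl scalerA mulrC.
Qed.

Lemma hnorm_scaled (R : realType) n (A Ba Bs : 'M[R]_n) (xi : R) k (U : 'cV[R[i]]_n) :
  xi != 0 ->
  hnorm2 (cplx_mx Bs *m symb_mx A Ba xi ^+ k *m U) =
  `|xi| ^+ (2 * k) * hnorm2 (Mk (cplx_mx Bs) (('i : R[i]) *: cplx_mx A) (cplx_mx Ba) (xi^-1) k *m U).
Proof.
move=> xi0; rewrite symb_scale // exprZmx -scalemxAr -scalemxAl hnorm2_scale.
by rewrite normcX normc_real -exprM mulnC.
Qed.

Theorem mainTheorem1 (R : realType) (n : nat) (A Ba Bs : 'M[R]_n) (K : nat) :
  (2 <= n)%N ->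
  A^T = A -> Ba^T = - Ba -> Bs^T = Bs ->
  (1 <= K)%N ->
  kalman_rank_cond Bs A Ba K ->
  exists (alpha beta : nat) (c : R), 0 < c /\
    forall U : 'cV[R[i]]_n,
      (forall xi : R, 1 <= `|xi| ->
         c * `|xi| ^- (2 * alpha) * hnorm2 U <=
         \sum_(k < K.+1) `|xi| ^- (2 * k) *
            hnorm2 (cplx_mx Bs *m symb_mx A Ba xi ^+ k *m U)) /\
      (forall xi : R, 0 < `|xi| <= 1 ->
         c * `|xi| ^+ (2 * beta) * hnorm2 U <=
         \sum_(k < K.+1) hnorm2 (cplx_mx Bs *m symb_mx A Ba xi ^+ k *m U)).
Proof.
move=> _ _ _ _ _ Hk.
pose B := cplx_mx Bs.
have h0 : forall m, hnorm2 (0 : 'cV[R[i]]_m) = 0.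
  by move=> m; rewrite hnorm2E big1 // => j _; rewrite mxE normc0 expr0n.
have Hyp1 : forall t : R, `|t| <= 1 -> t != 0 -> forall U : 'cV[R[i]]_n,
    (forall k : 'I_K.+1, Mk B (('i : R[i]) *: cplx_mx A) (cplx_mx Ba) t k *m U = 0) -> U = 0.
  move=> t t1 t0 U HU; apply: (@rank_kill R n A Ba Bs K t^-1 U Hk (invr_neq0 t0)) => k.
  apply: hnorm2_eq0; rewrite hnorm_scaled ?invr_neq0 // invrK.
  by rewrite (HU k) h0 mulr0.
have symbE : forall t : R, symb_mx A Ba t = cplx_mx Ba + t%:C *: (('i : R[i]) *: cplx_mx A).
  by move=> t; rewrite /symb_mx addrC scalerA mulrC.
have Hyp2 : forall t : R, `|t| <= 1 -> t != 0 -> forall U : 'cV[R[i]]_n,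
    (forall k : 'I_K.+1, Mk B (cplx_mx Ba) (('i : R[i]) *: cplx_mx A) t k *m U = 0) -> U = 0.
  move=> t t1 t0 U HU; apply: (@rank_kill R n A Ba Bs K t U Hk t0) => k.
  by rewrite symbE; apply: HU.
have [m1 [c1 [c1pos H1]]] := @key R n K B _ _ Hyp1.
have [m2 [c2 [c2pos H2]]] := @key R n K B _ _ Hyp2.
exists m1, m2, (Num.min c1 c2); split; first by rewrite lt_min c1pos c2pos.
move=> U; split.
  move=> xi xi1.
  have xi0 : xi != 0 by rewrite -normr_gt0 (lt_le_trans ltr01 xi1).
  have eta1 : `|xi^-1| <= 1.
    by rewrite normrV ?unitfE // invr_le1 // ?unitfE ?normr_eq0 ?normr_gt0.
  have -> : \sum_(k < K.+1) `|xi| ^- (2 * k) * hnorm2 (cplx_mx Bs *m symb_mx A Ba xi ^+ k *m U)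
          = \sum_(k < K.+1) hnorm2 (Mk B (('i : R[i]) *: cplx_mx A) (cplx_mx Ba) xi^-1 k *m U).
    apply: eq_bigr => k _; rewrite hnorm_scaled // mulKf //.
    by rewrite expf_neq0 // normr_eq0.
  apply: le_trans (H1 _ eta1 U).
  rewrite ler_wpM2r ?hnorm2_ge0 //.
  apply: ler_pM.
  - by rewrite le_min (ltW c1pos) (ltW c2pos).
  - by rewrite invr_ge0 exprn_ge0.
  - by rewrite ge_min lexx.
  rewrite -exprVn -normrV; last by rewrite unitfE.
  apply: (ler_wiXn2l (normr_ge0 _) eta1).
  by rewrite leq_pmull.
move=> xi /andP [xi0 xi1].
have -> : \sum_(k < K.+1) hnorm2 (cplx_mx Bs *m symb_mx A Ba xi ^+ k *m U)
          = \sum_(k < K.+1) hnorm2 (Mk B (cplx_mx Ba) (('i : R[i]) *: cplx_mx A) xi k *m U).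
  by apply: eq_bigr => k _; rewrite /Mk symbE.
apply: le_trans (H2 _ xi1 U).
rewrite ler_wpM2r ?hnorm2_ge0 //.
apply: ler_pM.
- by rewrite le_min (ltW c1pos) (ltW c2pos).
- by rewrite exprn_ge0.
- by rewrite ge_min lexx orbT.
apply: (ler_wiXn2l (normr_ge0 _) xi1).
by rewrite leq_pmull.
Qed.
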